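(* In the setting described in the context, the two-stage robust problem $w^*=\min_{x\in\mathcal X}c_1x+\max_{u\in\mathcal U(x)}\min_{y\in\mathcal Y(x,u)}c_2y$ is equivalent to the problem $\min c_1x+\eta$ over $x\in\mathcal X$, $\eta$, and, for each $\pi\in\mathcal P_\Pi$, vectors $u^\pi,y^\pi$, and for each $\gamma\in\mathcal R_\Pi$, vectors $v^\gamma,y^\gamma$, subject to: for all $\pi\in\mathcal P_\Pi$: $\eta\ge c_2y^\pi$, $y^\pi\in\mathcal Y(x,u^\pi)$, $u^\pi\in\arg\max\{(-Eu)^\intercal\pi: u\in\mathcal U(x)\}$; for all $\gamma\in\mathcal R_\Pi$: $y^\gamma\in\mathcal Y(x,v^\gamma)$, $v^\gamma\in\arg\max\{(-Ev)^\intercal\gamma: v\in\mathcal U(x)\}$; in particular this problem has optimal value $w^*$. The same holds when each argmax condition is replaced by the KKT optimality conditions of the corresponding linear program (yielding a single-level problem).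
   Context: $\mathcal X=\{x\in\mathbb Z^{m_x}_+\times\mathbb R^{n_x}_+: Ax\ge b\}$, $\mathcal U(x)=\{u\in\mathbb R^{n_u}_+: F(x)u\le h+Gx\}$ with $F(x)$ a matrix depending on $x$, $\mathcal Y(x,u)=\{y\in\mathbb R^{n_y}_+: B_2y\ge d-B_1x-Eu\}$. $\Pi=\{\pi\ge 0: B_2^\intercal\pi\le c_2^\intercal\}$, with finite sets of extreme points $\mathcal P_\Pi$ and extreme rays $\mathcal R_\Pi$. The optimal value of an infeasible minimization (maximization) problem is $+\infty$ ($-\infty$). Standing assumptions: (A1) $\mathcal U(x)\ne\emptyset$ for all $x\in\mathcal X$; (A2) $\mathcal U(x)$ is bounded for all $x\in\mathcal X$; (A3) $\min\{c_1x+c_2y: x\in\mathcal X,u\in\mathcal U(x),y\in\mathcal Y(x,u)\}$ has a finite optimal value. Two formulations are called equivalent if they have the same optimal value and any optimal first-stage solution of one is optimal for the other, and vice versa. *)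

(* Defs.v *)
From HB Require Import structures.
From mathcomp Require Import all_boot all_order all_algebra.
From mathcomp Require Import classical_sets reals constructive_ereal ereal.
Unset Printing Implicit Defensive.
Import Order.TTheory GRing.Theory Num.Theory.
Local Open Scope ring_scope.
Local Open Scope classical_set_scope.

(* Problem data.  x lives in 'cV_(mx + nx): first mx coordinates integer,
   last nx continuous.  Constraint rows: mA for X, mU for U(x), mY for Y(x,u). *)
Record data (R : realType) := Data {
  mx : nat; nx : nat; nu : nat; ny : nat; mA : nat; mU : nat; mY : nat;
  A : 'M[R]_(mA, mx + nx); b : 'cV[R]_mA;
  F : 'cV[R]_(mx + nx) -> 'M[R]_(mU, nu); h : 'cV[R]_mU; G : 'M[R]_(mU, mx + nx);
  B1 : 'M[R]_(mY, mx + nx); B2 : 'M[R]_(mY, ny); E : 'M[R]_(mY, nu); d : 'cV[R]_mY;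
  c1 : 'rV[R]_(mx + nx); c2 : 'rV[R]_ny }.
Arguments mx {R}. Arguments nx {R}. Arguments nu {R}. Arguments ny {R}. Arguments mA {R}. Arguments mU {R}. Arguments mY {R}.
Arguments A {R}. Arguments b {R}. Arguments F {R}. Arguments h {R}. Arguments G {R}.
Arguments B1 {R}. Arguments B2 {R}. Arguments E {R}. Arguments d {R}. Arguments c1 {R}. Arguments c2 {R}.

Section Defs.
Context {R : realType}.

Definition vle {n} (a b : 'cV[R]_n) := forall i, a i 0 <= b i 0.
Definition sc {n} (a : 'rV[R]_n) (v : 'cV[R]_n) : R := (a *m v) 0 0.
Definition ip {n} (a v : 'cV[R]_n) : R := (a^T *m v) 0 0.

Definition extreme_point {n} (S : set 'cV[R]_n) (p : 'cV[R]_n) :=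
  S p /\ forall p1 p2 (t : R), S p1 -> S p2 -> 0 < t < 1 ->
    p = t *: p1 + (1 - t) *: p2 -> p1 = p2.

Definition extreme_ray {n} (C : set 'cV[R]_n) (g : 'cV[R]_n) :=
  [/\ C g, g != 0 & forall g1 g2, C g1 -> C g2 -> g = g1 + g2 ->
      (exists2 t1 : R, 0 <= t1 & g1 = t1 *: g) /\
      (exists2 t2 : R, 0 <= t2 & g2 = t2 *: g)].

Variable D : data R.

Definition Xset : set 'cV[R]_(mx D + nx D) :=
  [set x | [/\ vle 0 x,
     (forall i : 'I_(mx D), x (lshift (nx D) i) 0 \is a Num.int) &
     vle (b D) (A D *m x)]].

Definition Uset (x : 'cV[R]_(mx D + nx D)) : set 'cV[R]_(nu D) :=
  [set u | vle 0 u /\ vle (F D x *m u) (h D + G D *m x)].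

Definition Yset (x : 'cV[R]_(mx D + nx D)) (u : 'cV[R]_(nu D)) : set 'cV[R]_(ny D) :=
  [set y | vle 0 y /\ vle (d D - B1 D *m x - E D *m u) (B2 D *m y)].

Definition Pi : set 'cV[R]_(mY D) :=
  [set p | vle 0 p /\ vle ((B2 D)^T *m p) (c2 D)^T].

(* recession cone of Pi; the extreme rays of Pi are those of this cone *)
Definition recPi : set 'cV[R]_(mY D) :=
  [set g | vle 0 g /\ vle ((B2 D)^T *m g) 0].

(* second-stage value  min { c2 y : y in Y(x,u) }  (+oo if infeasible) *)
Definition Qval x u : \bar R := ereal_inf [set (sc (c2 D) y)%:E | y in Yset x u].
(* max_{u in U(x)} Q(x,u)  (-oo if U(x) empty) *)
Definition Phi x : \bar R := ereal_sup [set Qval x u | u in Uset x].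
Definition wstar : \bar R := ereal_inf [set (sc (c1 D) x)%:E + Phi x | x in Xset].

Definition robust_opt x :=
  [/\ Xset x, (sc (c1 D) x)%:E + Phi x = wstar & wstar \is a fin_num].

(* value of the joint problem of (A3) *)
Definition joint_value : \bar R :=
  ereal_inf [set (sc (c1 D) t.1 + sc (c2 D) t.2.2)%:E | t in
     [set t | [/\ Xset t.1, Uset t.1 t.2.1 & Yset t.1 t.2.1 t.2.2]]].

Definition lobj (p : 'cV[R]_(mY D)) (u : 'cV[R]_(nu D)) : R := ip (- (E D *m u)) p.

Definition in_argmax x p u :=
  Uset x u /\ forall u', Uset x u' -> lobj p u' <= lobj p u.

(* KKT conditions of  max { (-E u)^T p : F(x) u <= h + G x, u >= 0 }
   with multipliers lam (for F(x) u <= h + G x) and mu (for u >= 0). *)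
Definition kkt x (p : 'cV[R]_(mY D)) (u : 'cV[R]_(nu D))
    (lam : 'cV[R]_(mU D)) (mu : 'cV[R]_(nu D)) :=
  [/\ vle 0 u /\ vle (F D x *m u) (h D + G D *m x),
      vle 0 lam /\ vle 0 mu,
      (F D x)^T *m lam - mu = - ((E D)^T *m p),
      (forall i, lam i 0 * (h D + G D *m x - F D x *m u) i 0 = 0) &
      (forall j, mu j 0 * u j 0 = 0)].

Definition ref_feas (PP RR : seq 'cV[R]_(mY D)) x (eta : R) :=
  Xset x /\
  exists (up : 'cV[R]_(mY D) -> 'cV[R]_(nu D)) (yp : 'cV[R]_(mY D) -> 'cV[R]_(ny D))
         (vg : 'cV[R]_(mY D) -> 'cV[R]_(nu D)) (yg : 'cV[R]_(mY D) -> 'cV[R]_(ny D)),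
    (forall p, p \in PP ->
       [/\ sc (c2 D) (yp p) <= eta, Yset x (up p) (yp p) & in_argmax x p (up p)]) /\
    (forall g, g \in RR -> Yset x (vg g) (yg g) /\ in_argmax x g (vg g)).

Definition ref_feas_kkt (PP RR : seq 'cV[R]_(mY D)) x (eta : R) :=
  Xset x /\
  exists (up : 'cV[R]_(mY D) -> 'cV[R]_(nu D)) (yp : 'cV[R]_(mY D) -> 'cV[R]_(ny D))
         (lp : 'cV[R]_(mY D) -> 'cV[R]_(mU D)) (mp : 'cV[R]_(mY D) -> 'cV[R]_(nu D))
         (vg : 'cV[R]_(mY D) -> 'cV[R]_(nu D)) (yg : 'cV[R]_(mY D) -> 'cV[R]_(ny D))
         (lg : 'cV[R]_(mY D) -> 'cV[R]_(mU D)) (mg : 'cV[R]_(mY D) -> 'cV[R]_(nu D)),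
    (forall p, p \in PP ->
       [/\ sc (c2 D) (yp p) <= eta, Yset x (up p) (yp p) & kkt x p (up p) (lp p) (mp p)]) /\
    (forall g, g \in RR -> Yset x (vg g) (yg g) /\ kkt x g (vg g) (lg g) (mg g)).

Definition ref_value (feas : 'cV[R]_(mx D + nx D) -> R -> Prop) : \bar R :=
  ereal_inf [set (sc (c1 D) xe.1 + xe.2)%:E | xe in [set xe | feas xe.1 xe.2]].

Definition ref_opt (feas : 'cV[R]_(mx D + nx D) -> R -> Prop) x :=
  exists eta : R, feas x eta /\ (sc (c1 D) x + eta)%:E = ref_value feas.

End Defs.

(* Main.v *)
Require Import Defs.
From HB Require Import structures.
From mathcomp Require Import all_boot all_order all_algebra.
From mathcomp Require Import classical_sets reals constructive_ereal ereal.
From mathcomp Require Import boolp.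
From mathcomp Require Import ring lra.
From Stdlib Require Import Classical.
Import Order.TTheory GRing.Theory Num.Theory.
Local Open Scope ring_scope.

Section FM.
Variable R : realFieldType.

Definition lhs (n : nat) (a z : nat -> R) := \sum_(j < n) a j * z j.

Inductive fmderiv (L : list ((nat -> R) * R)) : (nat -> R) -> R -> Prop :=
| DIn a b : List.In (a, b) L -> fmderiv L a b
| DZero : fmderiv L (fun _ => 0) 0
| DAdd a b a' b' : fmderiv L a b -> fmderiv L a' b' -> fmderiv L (fun j => a j + a' j) (b + b')
| DScale t a b : 0 <= t -> fmderiv L a b -> fmderiv L (fun j => t * a j) (t * b).

Lemma fmderiv_sound L n z a b : (forall a b, List.In (a, b) L -> lhs n a z <= b) ->
  fmderiv L a b -> lhs n a z <= b.
Proof.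
move=> H; elim => //.
- by rewrite /lhs big1 // => j _; rewrite mul0r.
- move=> a1 b1 a2 b2 _ H1 _ H2; rewrite /lhs.
  under eq_bigr do rewrite mulrDl.
  by rewrite big_split /=; apply: lerD.
- move=> t a1 b1 t0 _ H1; rewrite /lhs.
  under eq_bigr do rewrite -mulrA.
  by rewrite -mulr_sumr; apply: ler_wpM2l.
Qed.

Lemma fmderiv_mono L L' a b : (forall a b, List.In (a, b) L' -> fmderiv L a b) ->
  fmderiv L' a b -> fmderiv L a b.
Proof.
move=> H; elim => //; last by move=> *; constructor.
- by move=> *; apply: DZero.
- by move=> *; apply: DAdd.
Qed.

Lemma fmderiv_coord L k a b : (forall a b, List.In (a, b) L -> a k = 0) ->
  fmderiv L a b -> a k = 0.
Proof.
move=> H; elim => //=.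
- by move=> a1 b1 a2 b2 _ -> _ ->; rewrite addr0.
- by move=> t a1 b1 _ _ ->; rewrite mulr0.
Qed.

Lemma sep_lemma (T : Type) (P N : list T) (f g : T -> R) :
  (forall p q, List.In p P -> List.In q N -> g q <= f p) ->
  exists t, (forall p, List.In p P -> t <= f p) /\ (forall q, List.In q N -> g q <= t).
Proof.
case: N => [|q0 N] H.
- elim: P {H} => [|p P [t Ht]]; first by exists 0.
  exists (Num.min (f p) t); split => // p' /= [<-|Hp']; rewrite ge_min ?lexx //.
  by rewrite Ht.1 ?orbT.
- have [q [Hq Hmax]] : exists q, List.In q (q0 :: N) /\
      forall q', List.In q' (q0 :: N) -> g q' <= g q.
    elim: N {H} q0 => [|q1 N IH] q0; first by exists q0; split => [|q' [<-|[]]]; [by left|by []].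
    have [q [Hq Hm]] := IH q1.
    case: (lerP (g q0) (g q)) => Hle.
    + exists q; split; first by right.
      by move=> q' [<-|Hq'] //; apply: Hm.
    + exists q0; split; first by left.
      move=> q' [<-|Hq'] //; apply: le_trans (Hm _ Hq') (ltW Hle).
  exists (g q); split => // p Hp; exact: H.
Qed.

Definition combo (k : nat) (p q : (nat -> R) * R) : (nat -> R) * R :=
  (fun j => p.1 k * q.1 j + (- q.1 k) * p.1 j, p.1 k * q.2 + (- q.1 k) * p.2).

Lemma lhs_combo n k p q z : lhs n (combo k p q).1 z =
  p.1 k * lhs n q.1 z + (- q.1 k) * lhs n p.1 z.
Proof.
rewrite /lhs /= !mulr_sumr -big_split /=; apply: eq_bigr => j _; ring.
Qed.

Theorem FM n : forall L : list ((nat -> R) * R),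
  (exists z, forall a b, List.In (a, b) L -> lhs n a z <= b) \/
  (exists a b, fmderiv L a b /\ (forall j, (j < n)%N -> a j = 0) /\ b < 0).
Proof.
elim: n => [|n IH] L.
  case: (classic (exists a b, List.In (a, b) L /\ b < 0)) => [[a [b [HL Hb]]]|Hno].
  - by right; exists a, b; split; [apply: DIn|split].
  - left; exists (fun _ => 0) => a b HL; rewrite /lhs big_ord0.
    by rewrite leNgt; apply/negP => Hb; apply: Hno; exists a, b.
pose Ps := List.filter (fun r : (nat -> R) * R => 0 < r.1 n) L.
pose Ns := List.filter (fun r : (nat -> R) * R => r.1 n < 0) L.
pose Zs := List.filter (fun r : (nat -> R) * R => r.1 n == 0) L.
pose L' := Zs ++ List.flat_map (fun p => List.map (combo n p) Ns) Ps.
have HL' : forall a b, List.In (a, b) L' ->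
    (fmderiv L a b /\ a n = 0) \/
    exists p q, [/\ List.In p Ps, List.In q Ns & (a, b) = combo n p q].
  move=> a b; rewrite List.in_app_iff => -[].
    rewrite List.filter_In => -[HL /eqP Ha]; left; split => //; exact: DIn.
  rewrite List.in_flat_map => -[p [Hp]]; rewrite List.in_map_iff => -[q [Hq Hpq]].
  by right; exists p, q; split.
case: (IH L') => [[z Hz]|[a [b [Hd [Ha Hb]]]]]; last first.
  right; exists a, b; split; last split => //.
  - apply: fmderiv_mono Hd => a1 b1 /HL' [[]//|[[pa pb] [[qa qb] [Hp Hq Hc]]]].
    move: Hp Hq; rewrite !List.filter_In /= => -[Hp Hpn] [Hq Hqn].
    case: Hc => -> -> /=; apply: DAdd; apply: DScale; try exact: DIn.
      exact: ltW.
    by rewrite oppr_ge0 ltW.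
  - move=> j; rewrite ltnS leq_eqVlt => /orP [/eqP ->|/Ha //].
    apply: fmderiv_coord Hd => a1 b1 /HL' [[_ ->]//|[p [q [_ _ Hc]]]].
    by case: Hc => -> _ /=; ring.
pose U (r : (nat -> R) * R) := (r.2 - lhs n r.1 z) / r.1 n.
have [t [Ht1 Ht2]] : exists t, (forall p, List.In p Ps -> t <= U p) /\
    (forall q, List.In q Ns -> U q <= t).
  apply: sep_lemma => p q Hp Hq.
  have Hc : lhs n (combo n p q).1 z <= (combo n p q).2.
    apply: (Hz (combo n p q).1 (combo n p q).2).
    rewrite List.in_app_iff; right; rewrite List.in_flat_map; exists p; split => //.
    by rewrite List.in_map_iff; exists q; split => //; case: (combo n p q).
  rewrite lhs_combo /= in Hc.
  move: Hp Hq; rewrite !List.filter_In => -[_ Hap] [_ Haq].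
  set ap := p.1 n in Hc Hap *; set aq := q.1 n in Hc Haq *.
  rewrite /U -/ap -/aq.
  set X := (q.2 - _) / aq; set Y := (p.2 - _) / ap.
  have Hq0 : aq != 0 by rewrite ltr0_neq0.
  have Hp0 : ap != 0 by rewrite gt_eqF.
  have HX : X * aq = q.2 - lhs n q.1 z by rewrite /X divfK.
  have HY : Y * ap = p.2 - lhs n p.1 z by rewrite /Y divfK.
  have H0 : 0 <= ap * (X * aq) + (- aq) * (Y * ap) by rewrite HX HY; lra.
  have H1 : 0 <= (ap * - aq) * (Y - X).
    by rewrite (_ : _ * _ = ap * (X * aq) + (- aq) * (Y * ap)) //; ring.
  by rewrite pmulr_rge0 ?subr_ge0 // in H1; rewrite mulr_gt0 // oppr_gt0.
pose z' := fun j => if j == n then t else z j.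
left; exists z' => a b HL.
have -> : lhs n.+1 a z' = lhs n a z + a n * t.
  rewrite /lhs big_ord_recr /= /z' eqxx; congr (_ + _).
  by apply: eq_bigr => j _; rewrite /= ltn_eqF.
have [Hneg|Hpos|Hz0] := ltrgtP (a n) 0.
- have Hq : List.In (a, b) Ns by rewrite List.filter_In.
  have := Ht2 _ Hq; rewrite /U /=.
  rewrite ler_ndivrMr //; lra.
- have Hp : List.In (a, b) Ps by rewrite List.filter_In.
  have := Ht1 _ Hp; rewrite /U /= ler_pdivlMr //; lra.
- have : List.In (a, b) L' by rewrite List.in_app_iff; left; rewrite List.filter_In /= Hz0 eqxx.
  by move/Hz; rewrite Hz0 mul0r addr0.
Qed.

End FM.
Arguments fmderiv {R}. Arguments lhs {R}.


Section GF.
Variable R : realFieldType.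

Lemma In_seq (T : eqType) (s : seq T) x : x \in s -> List.In x s.
Proof. by elim: s => //= y s IH; rewrite inE => /orP [/eqP ->|/IH]; auto. Qed.

Lemma sum_delta (T : finType) (k0 : T) (F : T -> R) :
  \sum_k (k0 == k)%:R * F k = F k0.
Proof.
rewrite (bigD1 k0) //= eqxx mul1r big1 ?addr0 // => k Hk.
by rewrite eq_sym (negbTE Hk) mul0r.
Qed.

Lemma sum_delta2 (T : finType) (k0 : T) (F : T -> R) :
  \sum_k F k * (k == k0)%:R = F k0.
Proof.
rewrite -[RHS](@sum_delta _ k0); apply: eq_bigr => k _; by rewrite mulrC eq_sym.
Qed.

Lemma fmderiv_weights (I : finType) (f : I -> (nat -> R) * R) c be :
  fmderiv (List.map f (enum I)) c be ->
  exists w : I -> R, [/\ forall i, 0 <= w i,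
    forall o, c o = \sum_i w i * (f i).1 o & be = \sum_i w i * (f i).2].
Proof.
elim.
- move=> a b; rewrite List.in_map_iff => -[i [Hi _]].
  exists (fun k => (i == k)%:R); split => [k|o|]; first by rewrite ler0n.
    by rewrite sum_delta Hi.
  by rewrite sum_delta Hi.
- by exists (fun _ => 0); split => // [o|]; rewrite big1 // => i _; rewrite mul0r.
- move=> a b a' b' _ [w [Hw Ha Hb]] _ [w' [Hw' Ha' Hb']].
  exists (fun i => w i + w' i); split => [i|o|]; first by rewrite addr_ge0.
    by rewrite Ha Ha' -big_split; apply: eq_bigr => i _; rewrite mulrDl.
  by rewrite Hb Hb' -big_split; apply: eq_bigr => i _; rewrite mulrDl.
- move=> t a b Ht _ [w [Hw Ha Hb]].
  exists (fun i => t * w i); split => [i|o|]; first by rewrite mulr_ge0.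
    by rewrite Ha mulr_sumr; apply: eq_bigr => i _; rewrite mulrA.
  by rewrite Hb mulr_sumr; apply: eq_bigr => i _; rewrite mulrA.
Qed.

Lemma farkas_gen (I J : finType) (a : I -> J -> R) (b : I -> R) :
  (exists z : J -> R, forall i, \sum_j a i j * z j <= b i) \/
  (exists w : I -> R, [/\ forall i, 0 <= w i,
     forall j, \sum_i w i * a i j = 0 & \sum_i w i * b i < 0]).
Proof.
pose A i (o : nat) : R :=
  match (insub o : option 'I_#|J|) with Some o' => a i (enum_val o') | None => 0 end.
have HA : forall i (o : 'I_#|J|), A i o = a i (enum_val o) by move=> i o; rewrite /A valK.
pose L := List.map (fun i => (A i, b i)) (enum I).
have HS : forall i (z : J -> R), \sum_j a i j * z j = \sum_(o < #|J|) a i (enum_val o) * z (enum_val o).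
  move=> i z; rewrite (reindex (@enum_val J J)) //.
  by apply: onW_bij; exact: enum_val_bij.
case: (FM R #|J| L) => [[z Hz]|[c [be [Hd [Hc Hbe]]]]].
- left; exists (fun j => z (enum_rank j)) => i.
  have := Hz (A i) (b i); rewrite HS /lhs.
  have -> : \sum_(j < #|J|) A i j * z j = \sum_(o < #|J|) a i (enum_val o) * z (enum_rank (enum_val o)).
    by apply: eq_bigr => o _; rewrite HA enum_valK.
  apply; rewrite List.in_map_iff; exists i; split => //; apply: In_seq; by rewrite mem_enum.
- right; have [w [Hw Hcw Hbw]] := @fmderiv_weights _ (fun i => (A i, b i)) _ _ Hd.
  exists w; split => // [j|]; last by rewrite -Hbw.
  have := Hc (enum_rank j) (ltn_ord _); rewrite Hcw /=.
  move=> H; rewrite -[RHS]H; apply: eq_bigr => i _; by rewrite (HA i (enum_rank j)) enum_rankK.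
Qed.

Lemma farkas_nn (I J : finType) (a : I -> J -> R) (b : I -> R) :
  (exists z : J -> R, (forall j, 0 <= z j) /\ forall i, \sum_j a i j * z j <= b i) \/
  (exists w : I -> R, [/\ forall i, 0 <= w i,
     forall j, 0 <= \sum_i w i * a i j & \sum_i w i * b i < 0]).
Proof.
pose a' (k : I + J) (j : J) : R :=
  match k with inl i => a i j | inr j' => - (j' == j)%:R end.
pose b' (k : I + J) : R := match k with inl i => b i | inr _ => 0 end.
case: (@farkas_gen _ _ a' b') => [[z Hz]|[w [Hw Hwa Hwb]]].
- left; exists z; split => [j|i]; last exact: (Hz (inl i)).
  have := Hz (inr j); rewrite /=.
  under eq_bigr do rewrite mulNr.
  by rewrite sumrN sum_delta oppr_le0.
- right; exists (fun i => w (inl i)); split => // [j|].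
  + have := Hwa j; rewrite big_sumType /=.
    under [X in _ + X = _]eq_bigr do rewrite mulrN.
    rewrite sumrN sum_delta2 => /eqP; rewrite subr_eq0 => /eqP ->; exact: Hw.
  + move: Hwb; rewrite big_sumType /=; rewrite [X in _ + X]big1 ?addr0 // => j _; exact: mulr0.
Qed.
End GF.


Section SD.
Variable R : realType.

Lemma eqle (x y : R) : x = y -> x <= y. Proof. by move->. Qed.

Lemma ipE n (a v : 'cV[R]_n) : ip a v = \sum_i a i 0 * v i 0.
Proof. by rewrite /ip mxE; apply: eq_bigr => i _; rewrite mxE. Qed.

Lemma mulmxE' m n (M : 'M[R]_(m, n)) (y : 'cV_n) i : (M *m y) i 0 = \sum_j M i j * y j 0.
Proof. by rewrite mxE. Qed.

Lemma mulTmxE m n (M : 'M[R]_(m, n)) (p : 'cV_m) j : (M^T *m p) j 0 = \sum_i M i j * p i 0.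
Proof. by rewrite mxE; apply: eq_bigr => i _; rewrite mxE. Qed.

Lemma vle0 n (y : 'cV[R]_n) : vle 0 y <-> forall j, 0 <= y j 0.
Proof. by split => H j; move: (H j); rewrite mxE. Qed.

Variables (m n : nat) (M : 'M[R]_(m, n)) (r : 'cV[R]_m) (c : 'cV[R]_n).

Lemma WDg (y : 'cV_n) (p : 'cV_m) rho kap : vle 0 y -> vle 0 p ->
  vle rho (M *m y) -> vle (M^T *m p) kap -> ip rho p <= ip kap y.
Proof.
move=> /vle0 Hy /vle0 Hp H1 H2.
rewrite !ipE; apply: (@le_trans _ _ (\sum_i (M *m y) i 0 * p i 0)).
  by apply: ler_sum => i _; apply: ler_wpM2r.
apply: (@le_trans _ _ (\sum_j (M^T *m p) j 0 * y j 0)); last first.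
  by apply: ler_sum => j _; apply: ler_wpM2r.
under eq_bigr do rewrite mulmxE' mulr_suml.
rewrite exchange_big /=; apply: ler_sum => j _; rewrite mulTmxE mulr_suml.
by apply: eqle; apply: eq_bigr => i _; ring.
Qed.

Lemma SD1 : ~ (exists y, vle 0 y /\ vle r (M *m y)) ->
  exists g, [/\ vle 0 g, vle (M^T *m g) 0 & 0 < ip r g].
Proof.
move=> Hno.
case: (@farkas_nn R _ _ (fun i j => - M i j) (fun i => - r i 0)) => [[z [Hz1 Hz2]]|[w [Hw1 Hw2 Hw3]]].
- exfalso; apply: Hno; exists (\col_j z j); split.
    by apply/vle0 => j; rewrite mxE.
  move=> i; rewrite mulmxE'; have := Hz2 i.
  under eq_bigr do rewrite mulNr.
  rewrite sumrN lerN2 => H; apply: le_trans H _; apply: eqle; apply: eq_bigr => j _; by rewrite mxE.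
- exists (\col_i w i); split.
  + by apply/vle0 => i; rewrite mxE.
  + move=> j; rewrite mulTmxE mxE; have := Hw2 j.
    under eq_bigr do rewrite mulrN.
    rewrite sumrN oppr_ge0 => H; apply: le_trans H; apply: eqle; apply: eq_bigr => i _; by rewrite mxE mulrC.
  + rewrite ipE; move: Hw3.
    under eq_bigr do rewrite mulrN.
    rewrite sumrN oppr_lt0 => H; apply: lt_le_trans H _; apply: eqle; apply: eq_bigr => i _; by rewrite mxE mulrC.
Qed.

Lemma SD2 : (exists y, vle 0 y /\ vle r (M *m y)) ->
  ~ (exists p, vle 0 p /\ vle (M^T *m p) c) ->
  forall K, exists y, [/\ vle 0 y, vle r (M *m y) & ip c y < K].
Proof.
move=> [y0 [Hy0 Hy0']] Hno K.
case: (@farkas_nn R _ _ (fun j i => M i j) (fun j => c j 0)) => [[z [Hz1 Hz2]]|[w [Hw1 Hw2 Hw3]]].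
- exfalso; apply: Hno; exists (\col_i z i); split.
    by apply/vle0 => j; rewrite mxE.
  move=> j; rewrite mulTmxE; apply: le_trans (Hz2 j); apply: eqle; apply: eq_bigr => i _; by rewrite mxE.
pose dv := \col_j w j.
have Hcd : ip c dv < 0.
  rewrite ipE; apply: le_lt_trans Hw3; apply: eqle; apply: eq_bigr => i _; by rewrite mxE mulrC.
pose s := (`|ip c y0 - K| + 1) / (- ip c dv).
have Hs : 0 <= s by rewrite /s divr_ge0 // ?oppr_ge0 ?ltW // addr_ge0.
exists (y0 + s *: dv); split.
- move=> j; rewrite !mxE; apply: addr_ge0; first by have := Hy0 j; rewrite mxE.
  by apply: mulr_ge0 => //; rewrite mxE.
- move=> i; rewrite mulmxDr mxE; apply: ler_wpDr; last exact: Hy0'.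
  rewrite -scalemxAr mxE mulr_ge0 // mulmxE'.
  apply: le_trans (Hw2 i) _; apply: eqle; apply: eq_bigr => j _; by rewrite mxE mulrC.
- have -> : ip c (y0 + s *: dv) = ip c y0 + s * ip c dv.
    rewrite !ipE mulr_sumr -big_split /=; apply: eq_bigr => i _; rewrite !mxE; ring.
  have -> : s * ip c dv = - (`|ip c y0 - K| + 1).
    by rewrite /s; field; rewrite ?oppr_eq0 lt_eqF.
  have := ler_norm (ip c y0 - K); lra.
Qed.

Lemma ipZ k (t : R) (a v : 'cV[R]_k) : ip (t *: a) v = t * ip a v.
Proof. by rewrite !ipE mulr_sumr; apply: eq_bigr => i _; rewrite mxE mulrA. Qed.

Lemma sum0 (T : finType) (F : T -> R) : (forall i, F i = 0) -> \sum_i F i = 0.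
Proof. by move=> H; apply: big1 => i _; apply: H. Qed.

Lemma SD3 : (exists y, vle 0 y /\ vle r (M *m y)) ->
  (exists p, vle 0 p /\ vle (M^T *m p) c) ->
  exists y p, [/\ vle 0 y, vle r (M *m y), vle 0 p, vle (M^T *m p) c & ip c y <= ip r p].
Proof.
move=> [y0 [Hy0 Hy0']] [p0 [Hp0 Hp0']].
pose a (k : ('I_m + 'I_n) + 'I_1) (v : 'I_n + 'I_m) : R :=
  match k, v with
  | inl (inl i), inl j => - M i j
  | inl (inl i), inr _ => 0
  | inl (inr j), inl _ => 0
  | inl (inr j), inr i => M i j
  | inr _, inl j => c j 0
  | inr _, inr i => - r i 0 end.
pose b (k : ('I_m + 'I_n) + 'I_1) : R :=
  match k with inl (inl i) => - r i 0 | inl (inr j) => c j 0 | inr _ => 0 end.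
case: (@farkas_nn R _ _ a b) => [[z [Hz1 Hz2]]|[w [Hw1 Hw2 Hw3]]].
- exists (\col_j z (inl j)), (\col_i z (inr i)); split.
  + by apply/vle0 => j; rewrite mxE.
  + move=> i; rewrite mulmxE'; have := Hz2 (inl (inl i)).
    rewrite big_sumType /= (@sum0 _ (fun _ => 0 * _)) => [|?]; last by rewrite mul0r.
    rewrite addr0; under eq_bigr do rewrite mulNr.
    rewrite sumrN lerN2 => H; apply: le_trans H _; apply: eqle; apply: eq_bigr => j _; by rewrite mxE.
  + by apply/vle0 => j; rewrite mxE.
  + move=> j; rewrite mulTmxE; have := Hz2 (inl (inr j)).
    rewrite big_sumType /= (@sum0 _ (fun _ => 0 * _)) => [|?]; last by rewrite mul0r.
    rewrite add0r => H; apply: le_trans H; apply: eqle; apply: eq_bigr => i _; by rewrite mxE.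
  + have := Hz2 (inr ord0); rewrite big_sumType /= !ipE.
    under [X in X + _ <= _]eq_bigr do rewrite mulrC.
    under [X in _ + X <= _]eq_bigr do rewrite mulNr.
    rewrite sumrN subr_le0 => H.
    under [X in X <= _]eq_bigr do rewrite mxE mulrC.
    by under [X in _ <= X]eq_bigr do rewrite mxE.
exfalso.
pose bv := \col_i w (inl (inl i)); pose sv := \col_j w (inl (inr j)).
pose tau := w (inr ord0).
have Hbv : vle 0 bv by apply/vle0 => i; rewrite mxE.
have Hsv : vle 0 sv by apply/vle0 => i; rewrite mxE.
have H1 : vle (M^T *m bv) (tau *: c).
  move=> j; have := Hw2 (inl j); rewrite !big_sumType big_ord1 /=.
  rewrite (@sum0 _ (fun _ => _ * 0)) => [|?]; last by rewrite mulr0.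
  rewrite addr0; under eq_bigr do rewrite mulrN.
  rewrite sumrN mulTmxE mxE -subr_ge0 => H; rewrite -subr_ge0; apply: le_trans H _; apply: eqle.
  rewrite subr0 addrC; congr (_ - _).
  by apply: eq_bigr => i _; rewrite mxE mulrC.
have H2 : vle (tau *: r) (M *m sv).
  move=> i; have := Hw2 (inr i); rewrite !big_sumType big_ord1 /=.
  rewrite (@sum0 _ (fun _ => _ * 0)) => [|?]; last by rewrite mulr0.
  rewrite add0r mulrN subr_ge0 mulmxE' mxE => H; apply: le_trans H _; apply: eqle.
  by apply: eq_bigr => j _; rewrite mxE mulrC.
have H3 : ip c sv < ip r bv.
  move: Hw3; rewrite !big_sumType big_ord1 /= mulr0 addr0.
  under eq_bigr do rewrite mulrN.
  rewrite sumrN addrC subr_lt0 !ipE => H; apply: le_lt_trans (lt_le_trans H _); apply: eqle.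
  + by apply: eq_bigr => j _; rewrite mxE mulrC.
  + by apply: eq_bigr => i _; rewrite mxE mulrC.
have Htau : 0 <= tau by apply: Hw1.
case: (ltrgt0P tau) => [Htp|Htn|Ht0]; last 2 first.
- by move: Htau; rewrite leNgt Htn.
- have := WDg _ _ _ _ Hsv Hp0 H2 Hp0'; rewrite ipZ Ht0 mul0r => Ha.
  have := WDg _ _ _ _ Hy0 Hbv Hy0' H1; rewrite ipZ Ht0 mul0r => Hb.
  by have := lt_le_trans (le_lt_trans Ha H3) Hb; rewrite ltxx.
- have := WDg _ _ _ _ Hsv Hbv H2 H1; rewrite !ipZ ler_pM2l // => Hc.
  by have := lt_le_trans H3 Hc; rewrite ltxx.
Qed.

End SD.


Section Vertex.
Variable R : realType.

Lemma fin_argmin (T : finType) (P : pred T) (f : T -> R) :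
  (exists k, P k) -> exists k, P k /\ forall k', P k' -> f k <= f k'.
Proof.
move=> [k0 Hk0].
suff: forall s : seq T, (exists2 k, k \in s & P k) ->
    exists k, [/\ k \in s, P k & forall k', k' \in s -> P k' -> f k <= f k'].
  move=> /(_ (enum T)) [|k [_ Pk Hk]]; first by exists k0; rewrite ?mem_enum.
  by exists k; split => // k' Pk'; apply: Hk; rewrite ?mem_enum.
elim => [[k]//|a s IH [k Hk Pk]].
case: (boolP (has P s)) => [/hasP [k1 Hk1 Pk1]|Hno].
- have [k2 [Hk2 Pk2 Hm]] := IH (ex_intro2 _ _ k1 Hk1 Pk1).
  case: (boolP (P a)) => Pa; last first.
    exists k2; split => //; first by rewrite inE Hk2 orbT.
    move=> k'; rewrite inE => /orP [/eqP ->|]; [by rewrite (negbTE Pa)|exact: Hm].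
  case: (lerP (f a) (f k2)) => Hle.
  + exists a; split => //; first by rewrite inE eqxx.
    move=> k'; rewrite inE => /orP [/eqP ->//|Hk' Pk']; apply: le_trans Hle (Hm _ Hk' Pk').
  + exists k2; split => //; first by rewrite inE Hk2 orbT.
    move=> k'; rewrite inE => /orP [/eqP -> _|]; [exact: ltW|exact: Hm].
- have Pa : P a.
    move: Hk; rewrite inE => /orP [/eqP <-//|Hk]; exfalso.
    by move/negP: Hno; apply; apply/hasP; exists k.
  exists a; split => //; first by rewrite inE eqxx.
  move=> k'; rewrite inE => /orP [/eqP ->//|Hk' Pk'].
  by exfalso; move/negP: Hno; apply; apply/hasP; exists k'.
Qed.

Lemma conv_tight (t a b c : R) : 0 < t < 1 -> a <= c -> b <= c ->
  t * a + (1 - t) * b = c -> a = c /\ b = c.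
Proof.
move=> /andP [Ht0 Ht1] Ha Hb Hc.
have H1 : 0 <= t * (c - a) by apply: mulr_ge0; [exact: ltW|rewrite subr_ge0].
have H2 : 0 <= (1 - t) * (c - b) by apply: mulr_ge0; rewrite subr_ge0 // ltW.
have H3 : t * (c - a) + (1 - t) * (c - b) = 0 by rewrite -Hc; ring.
move/eqP: H3; rewrite paddr_eq0 // !mulf_eq0 => /andP [/orP [/eqP E1|/eqP E1] /orP [/eqP E2|/eqP E2]].
- by move: Ht0; rewrite E1 ltxx.
- by move: Ht0; rewrite E1 ltxx.
- by move: Ht1; rewrite -subr_gt0 E2 ltxx.
- by split; apply/eqP; rewrite eq_sym -subr_eq0 ?E1 ?E2.
Qed.

Variables (n : nat) (K : finType) (S : set 'cV[R]_n) (bt : K -> R)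
  (L : K -> 'cV[R]_n -> R) (obj : 'cV[R]_n -> R).
Hypothesis HLa : forall k u v, L k (u + v) = L k u + L k v.
Hypothesis HLs : forall k s u, L k (s *: u) = s * L k u.
Hypothesis Hoa : forall u v, obj (u + v) = obj u + obj v.
Hypothesis Hos : forall s u, obj (s *: u) = s * obj u.
Hypothesis HS : forall x, S x <-> forall k, L k x <= bt k.
Hypothesis Hpt : forall d, d != 0 -> exists k, L k d != 0.
Hypothesis HKb : exists Kb, forall x, S x -> obj x <= Kb.

Definition nt x := [set k | L k x != bt k].

Lemma linN (f : 'cV[R]_n -> R) : (forall s u, f (s *: u) = s * f u) -> forall u, f (- u) = - f u.
Proof. by move=> H u; rewrite -scaleN1r H mulN1r. Qed.

Lemma LN k u : L k (- u) = - L k u. Proof. exact: (linN _ (HLs k)). Qed.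
Lemma ON u : obj (- u) = - obj u. Proof. exact: (linN _ Hos). Qed.

Lemma improve x : S x -> ~ extreme_point S x ->
  exists x', [/\ S x', obj x <= obj x' & (#|nt x'| < #|nt x|)%N].
Proof.
move=> Hx Hne.
have [p1 [p2 [t [Hp1 Hp2 Ht Hxe Hne']]]] : exists p1 p2 t,
    [/\ S p1, S p2, 0 < t < 1, x = t *: p1 + (1 - t) *: p2 & p1 <> p2].
  apply: NNPP => Hn; apply: Hne; split => // p1 p2 t Hp1 Hp2 Ht Hxe.
  by apply: NNPP => Hne'; apply: Hn; exists p1, p2, t.
have Lx : forall k, L k x = t * L k p1 + (1 - t) * L k p2 by move=> k; rewrite Hxe HLa !HLs.
have Ox : obj x = t * obj p1 + (1 - t) * obj p2 by rewrite Hxe Hoa !Hos.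
pose d := p1 - p2.
have Hd0 : d != 0 by rewrite subr_eq0; apply/eqP.
have Ld : forall k, L k d = L k p1 - L k p2 by move=> k; rewrite /d HLa LN.
have Od : obj d = obj p1 - obj p2 by rewrite /d Hoa ON.
have Htight : forall k, L k x = bt k -> L k d = 0.
  move=> k Hk; have [E1 E2] := conv_tight _ _ _ _ Ht ((proj1 (HS p1)) Hp1 k) ((proj1 (HS p2)) Hp2 k) (esym (etrans (esym Hk) (Lx k))).
  by rewrite Ld E1 E2 subrr.
have [e [He0 Hed Hoe Hoe0]] : exists e, [/\ e != 0, forall k, L k x = bt k -> L k e = 0,
    0 <= obj e & obj e = 0 -> exists k, 0 < L k e].
  have HN : forall k, L k x = bt k -> L k (- d) = 0 by move=> k /Htight; rewrite LN => ->; rewrite oppr0.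
  have Hnd0 : - d != 0 by rewrite oppr_eq0.
  case: (ltrgt0P (obj d)) => [Hp|Hn|Hz].
  - by exists d; split => //; [exact: ltW|move=> E; move: Hp; rewrite E ltxx].
  - exists (- d); split => //; first by rewrite ON oppr_ge0 ltW.
    by rewrite ON => /eqP; rewrite oppr_eq0 => /eqP E; move: Hn; rewrite E ltxx.
  - have [k0 Hk0] := Hpt _ Hd0.
    case: (ltrgt0P (L k0 d)) => [Hp|Hn|Hz']; last by move: Hk0; rewrite Hz' eqxx.
    + by exists d; split => //; [rewrite Hz|exists k0].
    + exists (- d); split => //; first by rewrite ON Hz oppr0.
      by exists k0; rewrite LN oppr_gt0.
have [k1 Hk1] : exists k, 0 < L k e.
  case: (eqVneq (obj e) 0) => [/Hoe0 //|Hne0].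
  have Hpos : 0 < obj e by rewrite lt0r Hne0.
  apply: NNPP => Hno.
  have Hle : forall k, L k e <= 0 by move=> k; rewrite leNgt; apply/negP => H; apply: Hno; exists k.
  have [Kb HK] := HKb.
  pose s := (`|Kb - obj x| + 1) / obj e.
  have Hs : 0 <= s by rewrite /s divr_ge0 // ?addr_ge0 // ltW.
  have HSx : S (x + s *: e).
    apply/HS => k; rewrite HLa HLs; apply: le_trans ((proj1 (HS x)) Hx k).
    by rewrite gerDl (mulr_ge0_le0 Hs (Hle k)).
  have := HK _ HSx; rewrite Hoa Hos.
  have -> : s * obj e = `|Kb - obj x| + 1 by rewrite /s; field; rewrite gt_eqF.
  have := ler_norm (Kb - obj x); lra.
have [ks [Hks Hmin]] := @fin_argmin K (fun k => 0 < L k e) (fun k => (bt k - L k x) / L k e) (ex_intro _ k1 Hk1).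
pose s := (bt ks - L ks x) / L ks e.
have Hs : 0 <= s by rewrite /s divr_ge0 // ?subr_ge0 ?((proj1 (HS x)) Hx) // ltW.
exists (x + s *: e); split.
- apply/HS => k; rewrite HLa HLs.
  case: (ltP 0 (L k e)) => Hk.
  + have := Hmin k Hk; rewrite -/s ler_pdivlMr // => H; lra.
  + have := (proj1 (HS x)) Hx k; have := mulr_ge0_le0 Hs Hk; lra.
- by rewrite Hoa Hos lerDl mulr_ge0.
- apply: proper_card; apply/properP; split.
  + rewrite /nt; apply/fintype.subsetP => k; rewrite !inE; apply: contraNN => /eqP Hk.
    by rewrite HLa HLs (Hed _ Hk) mulr0 addr0 Hk.
  + exists ks; rewrite /nt !inE.
    * apply/eqP => Hk; have := Hed _ Hk; move: Hks; rewrite lt0r => /andP [/eqP ? _]; done.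
    * rewrite HLa HLs /s divfK; [by rewrite addrC subrK eqxx|by rewrite gt_eqF].
Qed.

Lemma vertex x0 : S x0 -> exists x, extreme_point S x /\ obj x0 <= obj x.
Proof.
move=> Hx0.
suff: forall N x, S x -> obj x0 <= obj x -> (#|nt x| <= N)%N ->
    exists x, extreme_point S x /\ obj x0 <= obj x.
  by move/(_ _ x0 Hx0 (lexx _) (leqnn _)).
elim => [|N IH] x Hx Hox HN.
- case: (classic (extreme_point S x)) => [He|Hne]; first by exists x.
  have [x' [_ _ Hc]] := improve _ Hx Hne; by move: Hc; rewrite ltnNge (leq_trans HN (leq0n _)).
- case: (classic (extreme_point S x)) => [He|Hne]; first by exists x.
  have [x' [Hx' Ho Hc]] := improve _ Hx Hne.
  apply: (IH x') => //; first exact: le_trans Ho.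
  by rewrite -ltnS; apply: leq_trans Hc HN.
Qed.
End Vertex.


Section Rays.
Variable R : realType.
Variable D : data R.

Lemma ipD n (a u v : 'cV[R]_n) : ip a (u + v) = ip a u + ip a v.
Proof. by rewrite !ipE -big_split; apply: eq_bigr => i _; rewrite mxE mulrDr. Qed.
Lemma ipZr n (a u : 'cV[R]_n) s : ip a (s *: u) = s * ip a u.
Proof. by rewrite !ipE mulr_sumr; apply: eq_bigr => i _; rewrite mxE; ring. Qed.
Lemma ip0r n (a : 'cV[R]_n) : ip a 0 = 0.
Proof. by rewrite ipE big1 // => i _; rewrite mxE mulr0. Qed.

Definition sumv {n} (u : 'cV[R]_n) := \sum_i u i 0.
Lemma sumvD n (u v : 'cV[R]_n) : sumv (u + v) = sumv u + sumv v.
Proof. by rewrite /sumv -big_split; apply: eq_bigr => i _; rewrite mxE. Qed.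
Lemma sumvZ n (u : 'cV[R]_n) s : sumv (s *: u) = s * sumv u.
Proof. by rewrite /sumv mulr_sumr; apply: eq_bigr => i _; rewrite mxE. Qed.

Lemma sumv_eq0 {n} {u : 'cV[R]_n} : vle 0 u -> sumv u = 0 -> u = 0.
Proof.
move=> /vle0 Hu Hs; apply/matrixP => i j; rewrite (ord1 j) mxE.
exact: (psumr_eq0P (fun i _ => Hu i) Hs).
Qed.

Lemma entry_le_sumv {n} (u : 'cV[R]_n) i : vle 0 u -> u i 0 <= sumv u.
Proof.
move=> /vle0 Hu; rewrite /sumv (bigD1 i) //= lerDl; exact: sumr_ge0.
Qed.

Lemma vleZ0 n (u : 'cV[R]_n) s : 0 <= s -> vle 0 u -> vle 0 (s *: u).
Proof. by move=> Hs /vle0 Hu; apply/vle0 => i; rewrite mxE mulr_ge0. Qed.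

Lemma vleMZ0 m n (M : 'M[R]_(m, n)) (u : 'cV[R]_n) s : 0 <= s -> vle (M *m u) 0 -> vle (M *m (s *: u)) 0.
Proof. move=> Hs H i; have := H i; rewrite -scalemxAr !mxE => Hi; exact: mulr_ge0_le0. Qed.

Definition Sp : set 'cV[R]_(mY D) :=
  [set g | [/\ vle 0 g, vle ((B2 D)^T *m g) 0 & sumv g <= 1]].

Lemma Sp_vertex (rr : 'cV[R]_(mY D)) g0 : Sp g0 ->
  exists g, extreme_point Sp g /\ ip rr g0 <= ip rr g.
Proof.
pose L (k : ('I_(mY D) + 'I_(ny D)) + 'I_1) (g : 'cV[R]_(mY D)) : R :=
  match k with inl (inl i) => - g i 0 | inl (inr j) => ((B2 D)^T *m g) j 0 | inr _ => sumv g end.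
pose bt (k : ('I_(mY D) + 'I_(ny D)) + 'I_1) : R :=
  match k with inl (inl i) => 0 | inl (inr j) => 0 | inr _ => 1 end.
apply: (@vertex R _ _ Sp bt L (ip rr)).
- move=> [[i|j]|o] u v /=; [by rewrite !mxE opprD|by rewrite mulmxDr mxE|by rewrite sumvD].
- by move=> [[i|j]|o] s u /=; rewrite ?sumvZ // -?scalemxAr !mxE ?mulrN.
- exact: ipD.
- by move=> s u; rewrite ipZr.
- move=> x; split.
  + move=> [H1 H2 H3] [[i|j]|o] /=; last by [].
    * by rewrite oppr_le0; move/vle0: H1; apply.
    * by have := H2 j; rewrite [X in _ <= X]mxE.
  + move=> H; split => [|j|]; last exact: (H (inr ord0)).
    * by apply/vle0 => i; have := H (inl (inl i)); rewrite /= oppr_le0.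
    * by rewrite [X in _ <= X]mxE; exact: (H (inl (inr j))).
- move=> d Hd; have [i Hi] : exists i, d i 0 != 0.
    apply: NNPP => Hno; move/eqP: Hd; apply; apply/matrixP => i j.
    rewrite (ord1 j) mxE; apply/eqP; apply: NNPP => Hn; apply: Hno; by exists i; apply/negP.
  by exists (inl (inl i)); rewrite /= oppr_eq0.
- exists (\sum_i `|rr i 0|) => x [H1 H2 H3]; rewrite ipE; apply: ler_sum => i _.
  apply: (@le_trans _ _ (`|rr i 0| * x i 0)).
    by apply: ler_wpM2r; [move/vle0: H1; apply|exact: ler_norm].
  rewrite -[leRHS]mulr1; apply: ler_wpM2l => //; apply: le_trans H3; exact: entry_le_sumv.
Qed.

Lemma sumv_ge0 {n} {u : 'cV[R]_n} : vle 0 u -> 0 <= sumv u.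
Proof. by move=> /vle0 Hu; apply: sumr_ge0 => i _. Qed.

Lemma sumv_gt0 {n} {u : 'cV[R]_n} : vle 0 u -> u != 0 -> 0 < sumv u.
Proof.
move=> Hu Hn; rewrite lt0r sumv_ge0 // andbT; apply/eqP => /(sumv_eq0 Hu) E.
by move: Hn; rewrite E eqxx.
Qed.

Lemma Sp_scale {u : 'cV[R]_(mY D)} : vle 0 u -> vle ((B2 D)^T *m u) 0 -> u != 0 ->
  Sp ((sumv u)^-1 *: u).
Proof.
move=> H1 H2 Hn; have Hs := sumv_gt0 H1 Hn.
split; [apply: vleZ0 => //; rewrite invr_ge0 ltW //|apply: vleMZ0 => //; rewrite invr_ge0 ltW //|].
by rewrite sumvZ mulVf ?gt_eqF.
Qed.

Lemma ray_exists (rr : 'cV[R]_(mY D)) g : recPi D g -> 0 < ip rr g ->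
  exists g', extreme_ray (recPi D) g' /\ 0 < ip rr g'.
Proof.
move=> [Hg1 Hg2] Hpos.
have Hg0 : g != 0 by apply/eqP => E; move: Hpos; rewrite E ip0r ltxx.
have [gam [[[Hc1 Hc2 Hc3] Hext] Hle]] := Sp_vertex rr _ (Sp_scale Hg1 Hg2 Hg0).
have Hgp : 0 < ip rr gam.
  apply: lt_le_trans Hle; rewrite ipZr mulr_gt0 // invr_gt0; exact: sumv_gt0.
have Hgam0 : gam != 0 by apply/eqP => E; move: Hgp; rewrite E ip0r ltxx.
have Hsg := sumv_gt0 Hc1 Hgam0.
have Hs1 : sumv gam = 1.
  apply/eqP; rewrite eq_le Hc3 /=; rewrite leNgt; apply/negP => Hlt.
  have Hsp : Sp ((sumv gam)^-1 *: gam) by apply: Sp_scale.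
  have H0 : Sp 0 by split; [apply/vle0 => i; rewrite mxE|rewrite mulmx0|rewrite /sumv big1 // => i _; rewrite mxE].
  have := Hext _ _ (sumv gam) Hsp H0; rewrite Hsg Hlt => /(_ isT).
  rewrite scaler0 addr0 scalerA mulfV ?gt_eqF // scale1r => /(_ erefl) E.
  by move: Hgam0; rewrite -[gam]scale1r -(mulfV (negbT (gt_eqF Hsg))) -scalerA E scaler0 eqxx.
exists gam; split => //; split => //.
move=> g1 g2 [Ha1 Ha2] [Hb1 Hb2] Hsum.
have Hs12 : sumv g1 + sumv g2 = 1 by rewrite -sumvD -Hsum.
have Hs1p := sumv_ge0 Ha1; have Hs2p := sumv_ge0 Hb1.
case: (eqVneq (sumv g1) 0) => [E1|N1].
  have Eg1 : g1 = 0 by apply: sumv_eq0.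
  split; [exists 0 => //; by rewrite scale0r|exists 1 => //; by rewrite scale1r Hsum Eg1 add0r].
case: (eqVneq (sumv g2) 0) => [E2|N2].
  have Eg2 : g2 = 0 by apply: sumv_eq0.
  split; [exists 1 => //; by rewrite scale1r Hsum Eg2 addr0|exists 0 => //; by rewrite scale0r].
have Hg1n : g1 != 0 by apply/eqP => E; move: N1; rewrite E /sumv big1 ?eqxx // => i _; rewrite mxE.
have Hg2n : g2 != 0 by apply/eqP => E; move: N2; rewrite E /sumv big1 ?eqxx // => i _; rewrite mxE.
have Hs1' : 0 < sumv g1 by exact: sumv_gt0.
have Hs2' : 0 < sumv g2 by exact: sumv_gt0.
have E : (sumv g1)^-1 *: g1 = (sumv g2)^-1 *: g2.
  apply: (Hext _ _ (sumv g1) (Sp_scale Ha1 Ha2 Hg1n) (Sp_scale Hb1 Hb2 Hg2n)).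
    by rewrite Hs1' /= -Hs12 ltrDl.
  have -> : 1 - sumv g1 = sumv g2 by rewrite -Hs12; ring.
  by rewrite !scalerA !mulfV ?gt_eqF // !scale1r.
have Eg : gam = (sumv g1)^-1 *: g1.
  rewrite Hsum -{1}[g1](@scalerKV _ _ (sumv g1)) ?gt_eqF // -{1}[g2](@scalerKV _ _ (sumv g2)) ?gt_eqF //.
  by rewrite E -scalerDl Hs12 scale1r.
split.
- exists (sumv g1) => //; by rewrite Eg scalerA mulfV ?gt_eqF // scale1r.
- exists (sumv g2) => //; by rewrite Eg E scalerA mulfV ?gt_eqF // scale1r.
Qed.

Lemma Pi_vertex (rr : 'cV[R]_(mY D)) w Kb : Pi D w ->
  (forall p, Pi D p -> ip rr p <= Kb) ->
  exists p, extreme_point (Pi D) p /\ ip rr w <= ip rr p.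
Proof.
move=> Hw HK.
pose L (k : 'I_(mY D) + 'I_(ny D)) (g : 'cV[R]_(mY D)) : R :=
  match k with inl i => - g i 0 | inr j => ((B2 D)^T *m g) j 0 end.
pose bt (k : 'I_(mY D) + 'I_(ny D)) : R :=
  match k with inl i => 0 | inr j => c2 D 0 j end.
apply: (@vertex R _ _ (Pi D) bt L (ip rr)) => //.
- move=> [i|j] u v /=; [by rewrite !mxE opprD|by rewrite mulmxDr mxE].
- by move=> [i|j] s u /=; rewrite -?scalemxAr !mxE ?mulrN.
- exact: ipD.
- by move=> s u; rewrite ipZr.
- move=> x; split.
  + move=> [H1 H2] [i|j] /=.
    * by rewrite oppr_le0; move/vle0: H1; apply.
    * by have := H2 j; rewrite [X in _ <= X]mxE.
  + move=> H; split => [|j].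
    * by apply/vle0 => i; have := H (inl i); rewrite /= oppr_le0.
    * by rewrite [X in _ <= X]mxE; exact: (H (inr j)).
- move=> d Hd; have [i Hi] : exists i, d i 0 != 0.
    apply: NNPP => Hno; move/eqP: Hd; apply; apply/matrixP => i j.
    rewrite (ord1 j) mxE; apply/eqP; apply: NNPP => Hn; apply: Hno; by exists i; apply/negP.
  by exists (inl i); rewrite /= oppr_eq0.
- by exists Kb.
Qed.

End Rays.


Local Open Scope classical_set_scope.
Section IP.
Variable R : realType.
Lemma ipDl n (a b v : 'cV[R]_n) : ip (a + b) v = ip a v + ip b v.
Proof. by rewrite !ipE -big_split; apply: eq_bigr => i _; rewrite mxE mulrDl. Qed.
Lemma ipNl n (a v : 'cV[R]_n) : ip (- a) v = - ip a v.
Proof. by rewrite !ipE -sumrN; apply: eq_bigr => i _; rewrite mxE mulNr. Qed.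
Lemma ipNr n (a v : 'cV[R]_n) : ip a (- v) = - ip a v.
Proof. by rewrite !ipE -sumrN; apply: eq_bigr => i _; rewrite mxE mulrN. Qed.
Lemma ipC n (a v : 'cV[R]_n) : ip a v = ip v a.
Proof. by rewrite !ipE; apply: eq_bigr => i _; rewrite mulrC. Qed.
Lemma ipMT m n (M : 'M[R]_(m, n)) (y : 'cV[R]_n) (p : 'cV[R]_m) :
  ip (M *m y) p = ip (M^T *m p) y.
Proof.
rewrite !ipE; under eq_bigr do rewrite mulmxE' mulr_suml.
rewrite exchange_big /=; apply: eq_bigr => j _; rewrite mulTmxE mulr_suml.
by apply: eq_bigr => i _; ring.
Qed.
Lemma sc_ip n (c : 'rV[R]_n) (y : 'cV[R]_n) : sc c y = ip c^T y.
Proof. by rewrite /sc /ip trmxK. Qed.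
Lemma ip_ge0 n (a v : 'cV[R]_n) : vle 0 a -> vle 0 v -> 0 <= ip a v.
Proof.
move=> /vle0 Ha /vle0 Hv; rewrite ipE; apply: sumr_ge0 => i _; exact: mulr_ge0.
Qed.
Lemma ip_eq0 n (a v : 'cV[R]_n) : vle 0 a -> vle 0 v -> ip a v = 0 ->
  forall i, a i 0 * v i 0 = 0.
Proof.
move=> /vle0 Ha /vle0 Hv; rewrite ipE => H i.
exact: (psumr_eq0P (fun i _ => mulr_ge0 (Ha i) (Hv i)) H).
Qed.
Lemma vle_sub n (a b : 'cV[R]_n) : vle a b <-> vle 0 (b - a).
Proof.
split => H i; move: (H i); rewrite !mxE; by rewrite subr_ge0.
Qed.
End IP.

Section Key.
Variable R : realType.
Variable D : data R.

Definition rY x (u : 'cV[R]_(nu D)) := d D - B1 D *m x - E D *m u.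

Lemma lobjE p u : lobj D p u = - ip ((E D)^T *m p) u.
Proof. by rewrite /lobj ipNl ipMT. Qed.

Lemma rY_lobj x u p : ip (rY x u) p = ip (d D - B1 D *m x) p + lobj D p u.
Proof. by rewrite /rY ipDl /lobj. Qed.

Lemma argmax_rY x p u v : in_argmax D x p v -> Uset D x u ->
  ip (rY x u) p <= ip (rY x v) p.
Proof. by move=> [_ H] Hu; rewrite !rY_lobj lerD2l; apply: H. Qed.

Lemma WD_Y x u y p : Yset D x u y -> Pi D p -> ip (rY x u) p <= sc (c2 D) y.
Proof. move=> [H1 H2] [H3 H4]; rewrite sc_ip; exact: (@WDg _ _ _ _ _ _ _ _ H1 H3 H2 H4). Qed.

Lemma ray_neg x v y g : Yset D x v y -> recPi D g -> ip (rY x v) g <= 0.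
Proof.
move=> [H1 H2] [H3 H4]; have := (@WDg _ _ _ _ _ _ _ _ H1 H3 H2 H4).
by rewrite [ip 0 y]ipE big1 // => i _; rewrite mxE mul0r.
Qed.

Lemma kkt_argmax x p u lam mu : kkt D x p u lam mu -> in_argmax D x p u.
Proof.
move=> [[Hu1 Hu2] [Hl Hm] Heq Hcs1 Hcs2]; split => // u' [Hu1' Hu2'].
have Hc : (E D)^T *m p = mu - (F D x)^T *m lam by rewrite -[LHS]opprK -Heq opprB.
rewrite !lobjE Hc !ipDl !ipNl -!ipMT.
set s := h D + G D *m x.
have A1 : ip mu u = 0 by rewrite ipE big1 // => j _; rewrite Hcs2.
have A2 : ip (F D x *m u) lam = ip s lam.
  apply/eqP; rewrite eq_sym -subr_eq0 -ipNl -ipDl ipC ipE; apply/eqP.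
  by apply: big1 => i _; exact: Hcs1.
have B1 : 0 <= ip mu u' by apply: ip_ge0.
have B2 : ip (F D x *m u') lam <= ip s lam.
  rewrite -subr_ge0 -ipNl -ipDl ipC; apply: ip_ge0 => //; exact: (proj1 (vle_sub _ _ _ _) Hu2').
rewrite A1 A2; lra.
Qed.
Lemma kkt_exists x p : Uset D x !=set0 ->
  (exists M : R, forall u, Uset D x u -> forall j, `|u j 0| <= M) ->
  exists u lam mu, kkt D x p u lam mu.
Proof.
move=> [u0 Hu0] [Mb HMb].
pose Mat := - F D x; pose s := h D + G D *m x; pose rr := - s; pose cc := (E D)^T *m p.
have HU : forall u, Uset D x u <-> vle 0 u /\ vle rr (Mat *m u).
  move=> u; split => -[H1 H2]; split => // i; move: (H2 i);
    by rewrite /Mat /rr mulNmx !mxE lerN2.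
have HT : forall lam : 'cV_(mU D), (Mat^T *m lam) = - ((F D x)^T *m lam).
  by move=> lam; rewrite /Mat linearN /= mulNmx.
have [lam0 Hlam0] : exists lam, vle 0 lam /\ vle (Mat^T *m lam) cc.
  apply: NNPP => Hno.
  have [u [Hu1 Hu2 Hu3]] := @SD2 R _ _ Mat rr cc (ex_intro _ u0 (proj1 (HU u0) Hu0)) Hno
    (- (\sum_j `|cc j 0|) * Mb).
  have Hu : Uset D x u by apply/HU.
  move: Hu3; rewrite ipE mulNr mulr_suml -sumrN ltNge; move/negP; apply.
  apply: ler_sum => j _; rewrite -mulNr.
  have H1 : `|cc j 0 * u j 0| <= `|cc j 0| * Mb by rewrite normrM ler_wpM2l // HMb.
  have H2 := ler_norm (- (cc j 0 * u j 0)); rewrite normrN in H2; lra.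
have [u [lam [Hu1 Hu2 Hl1 Hl2 Hc]]] := @SD3 R _ _ Mat rr cc (ex_intro _ u0 (proj1 (HU u0) Hu0)) (ex_intro _ lam0 Hlam0).
pose mu := (F D x)^T *m lam + cc.
have Hmu : vle 0 mu.
  move=> j; have := Hl2 j; rewrite HT /mu !mxE => H; lra.
have HUu : Uset D x u by apply/HU.
have Hsl : vle 0 (s - F D x *m u) by exact: (proj1 (vle_sub _ _ _ _) (proj2 HUu)).
have HX : 0 <= ip lam (s - F D x *m u) by apply: ip_ge0.
have HY : 0 <= ip mu u by apply: ip_ge0.
have HXY : ip lam (s - F D x *m u) + ip mu u <= 0.
  rewrite /mu ipDl ipC ipDl ipNl ipMT.
  move: Hc; rewrite /rr ipNl (ipC _ _ s lam); lra.
exists u, lam, mu; split => //.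
- by rewrite /mu opprD addrA subrr add0r.
- by apply: (@ip_eq0 _ _ _ _ Hl1 Hsl); lra.
- by apply: (@ip_eq0 _ _ _ _ Hmu Hu1); lra.
Qed.
End Key.


Section Main.
Variable R : realType.
Variable D : data R.
Variables PP RR : seq 'cV[R]_(mY D).
Hypothesis HPP : forall p, p \in PP <-> extreme_point (Pi D) p.
Hypothesis HRR1 : forall g, g \in RR -> extreme_ray (recPi D) g.
Hypothesis HRR2 : forall g, extreme_ray (recPi D) g -> exists2 t : R, 0 < t & t *: g \in RR.
Hypothesis HA1 : forall x, Xset D x -> Uset D x !=set0.
Hypothesis HA2 : forall x, Xset D x -> exists M : R,
                 forall u, Uset D x u -> forall j, `|u j 0| <= M.

Lemma Ynonempty x u :
  (forall g, g \in RR -> exists v y, Yset D x v y /\ in_argmax D x g v) ->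
  Uset D x u -> exists y, Yset D x u y.
Proof.
move=> Hray Hu; apply: NNPP => Hno.
have [gam [Hg1 Hg2 Hg3]] := @SD1 R _ _ (B2 D) (rY R D x u) Hno.
have [g' [Hext Hpos]] := @ray_exists R D (rY R D x u) gam (conj Hg1 Hg2) Hg3.
have [t Ht Hin] := HRR2 _ Hext.
have [v [y [Hy Harg]]] := Hray _ Hin.
have Hrec : recPi D (t *: g').
  case: Hext => -[H1 H2] _ _; split; [exact: vleZ0 (ltW Ht) H1|exact: vleMZ0 (ltW Ht) H2].
have := le_trans (@argmax_rY R D x _ u v Harg Hu) (@ray_neg R D x v y _ Hy Hrec).
by rewrite ipZr leNgt mulr_gt0.
Qed.

Lemma feas_to_phi x eta : ref_feas D PP RR x eta -> Xset D x /\ (Phi D x <= eta%:E)%E.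
Proof.
move=> [HX [up [yp [vg [yg [Hp Hr]]]]]]; split => //.
have Hray : forall g, g \in RR -> exists v y, Yset D x v y /\ in_argmax D x g v.
  by move=> g Hg; exists (vg g), (yg g); apply: Hr.
have Hgood : forall u, Uset D x u -> exists y, Yset D x u y /\ sc (c2 D) y <= eta.
  move=> u Hu; have [y0 Hy0] := @Ynonempty x u Hray Hu.
  case: (classic (exists p, Pi D p)) => [[p0 Hp0]|Hno].
  - have [y [w [H1 H2 H3 H4 H5]]] := @SD3 R _ _ (B2 D) (rY R D x u) (c2 D)^T
      (ex_intro _ y0 Hy0) (ex_intro _ p0 Hp0).
    have [ps [Hext Hle]] := @Pi_vertex R D (rY R D x u) w (sc (c2 D) y) (conj H3 H4)
      (fun p Hp => @WD_Y R D x u y p (conj H1 H2) Hp).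
    have Hin : ps \in PP by apply/HPP.
    have [Hsc HY Harg] := Hp ps Hin.
    exists y; split; first by split.
    rewrite sc_ip; apply: le_trans H5 _; apply: le_trans Hle _.
    apply: le_trans (@argmax_rY R D x ps u (up ps) Harg Hu) _.
    apply: le_trans Hsc; exact: (@WD_Y R D x _ _ ps HY (proj1 Hext)).
  - have [y [H1 H2 H3]] := @SD2 R _ _ (B2 D) (rY R D x u) (c2 D)^T (ex_intro _ y0 Hy0) Hno eta.
    by exists y; split; [split|rewrite sc_ip ltW].
apply: ge_ereal_sup => q [u Hu <-].
have [y [Hy Hle]] := Hgood u Hu.
apply: le_trans (_ : (sc (c2 D) y)%:E <= _)%E; last by rewrite lee_fin.
by apply: ereal_inf_lbound; exists y.
Qed.

Lemma feas_kkt_to_feas x eta : ref_feas_kkt D PP RR x eta -> ref_feas D PP RR x eta.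
Proof.
move=> [HX [up [yp [lp [mp [vg [yg [lg [mg [Hp Hr]]]]]]]]]]; split => //.
exists up, yp, vg, yg; split.
- by move=> p Hin; have [H1 H2 H3] := Hp p Hin; split => //; exact: kkt_argmax H3.
- by move=> g Hin; have [H1 H2] := Hr g Hin; split => //; exact: kkt_argmax H2.
Qed.

Lemma phi_to_feas_kkt x eta : Xset D x -> (Phi D x <= eta%:E)%E -> ref_feas_kkt D PP RR x eta.
Proof.
move=> HX Hphi.
have HQ : forall u, Uset D x u -> (Qval D x u <= eta%:E)%E.
  move=> u Hu; apply: le_trans Hphi; apply: ereal_sup_ubound; by exists u.
have HYne : forall u, Uset D x u -> exists y, Yset D x u y.
  move=> u Hu; apply: NNPP => Hno.
  have E : Yset D x u = set0.
    by apply/seteqP; split => y //= Hy; apply: Hno; exists y.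
  by have := HQ u Hu; rewrite /Qval E image_set0 ereal_inf0 leNgt ltey.
have Hall : forall p, exists q : 'cV[R]_(nu D) * 'cV[R]_(ny D) * 'cV[R]_(mU D) * 'cV[R]_(nu D),
    [/\ kkt D x p q.1.1.1 q.1.2 q.2, Yset D x q.1.1.1 q.1.1.2 &
        (Pi D p -> sc (c2 D) q.1.1.2 <= eta)].
  move=> p; have [u [lam [mu Hk]]] := @kkt_exists R D x p (HA1 _ HX) (HA2 _ HX).
  have Hu : Uset D x u by case: Hk.
  have [y0 Hy0] := HYne u Hu.
  case: (classic (Pi D p)) => [Hp|Hnp]; last by exists (u, y0, lam, mu); split.
  have [y [w [H1 H2 H3 H4 H5]]] := @SD3 R _ _ (B2 D) (rY R D x u) (c2 D)^T
      (ex_intro _ y0 Hy0) (ex_intro _ p Hp).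
  exists (u, y, lam, mu); split; [done|by split|move=> _].
  suff : ((sc (c2 D) y)%:E <= eta%:E)%E by rewrite lee_fin.
  apply: le_trans (HQ u Hu).
  apply: le_ereal_inf_tmp => z [y' Hy' <-]; rewrite lee_fin sc_ip.
  apply: le_trans H5 _; exact: (@WD_Y R D x u y' w Hy' (conj H3 H4)).
have [f Hf] := choice Hall.
split => //.
exists (fun p => (f p).1.1.1), (fun p => (f p).1.1.2), (fun p => (f p).1.2), (fun p => (f p).2).
exists (fun p => (f p).1.1.1), (fun p => (f p).1.1.2), (fun p => (f p).1.2), (fun p => (f p).2).
split.
- move=> p Hin; have [H1 H2 H3] := Hf p; split => //; apply: H3.
  by have [[]] := proj1 (HPP p) Hin.
- by move=> g Hin; have [H1 H2 H3] := Hf g.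
Qed.

End Main.


Section Final.
Variable R : realType.
Variable D : data R.

Lemma final_gen (feas : 'cV[R]_(mx D + nx D) -> R -> Prop) :
  (forall x eta, feas x eta <-> Xset D x /\ (Phi D x <= eta%:E)%E) ->
  ref_value D feas = wstar D /\ forall x, robust_opt D x <-> ref_opt D feas x.
Proof.
move=> Hf.
have Hv : ref_value D feas = wstar D.
  apply/eqP; rewrite eq_le; apply/andP; split.
  - apply: le_ereal_inf_tmp => z [x HX <-].
    case E : (Phi D x) => [r| |].
    + rewrite -EFinD; apply: ereal_inf_lbound; exists (x, r) => //=.
      by apply/Hf; rewrite E.
    + by rewrite addey ?leey.
    + rewrite addeNy.
      have H : forall eta : R, (ref_value D feas <= (sc (c1 D) x + eta)%:E)%E.
        move=> eta; apply: ereal_inf_lbound; exists (x, eta) => //=.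
        by apply/Hf; rewrite E leNye.
      case Erv : (ref_value D feas) => [r'| |] //.
      * exfalso; have := H ((r' - sc (c1 D) x - 1)%R); rewrite Erv lee_fin; lra.
      * by have := H 0; rewrite Erv leNgt ltey.
  - apply: le_ereal_inf_tmp => z [[x eta] /= Hxe <-].
    have [HX Hle] := proj1 (Hf x eta) Hxe.
    apply: le_trans (ereal_inf_lbound _) _; first by exists x.
    by rewrite EFinD leeD2lE.
split => // x; split.
- move=> [HX Heq Hfin].
  have HP : Phi D x \is a fin_num by move: Hfin; rewrite -Heq fin_numD => /andP [].
  exists (fine (Phi D x)); split; first by apply/Hf; rewrite fineK.
  by rewrite Hv EFinD fineK.
- move=> [eta [Hxe Heq]].
  have [HX Hle] := proj1 (Hf x eta) Hxe.
  split => //; last by rewrite -Hv -Heq.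
  apply/eqP; rewrite eq_le; apply/andP; split.
  + by rewrite -Hv -Heq EFinD leeD2lE.
  + by apply: ereal_inf_lbound; exists x.
Qed.
End Final.


Local Open Scope classical_set_scope.

Theorem theorem4 (R : realType) (D : data R) (PP RR : seq 'cV[R]_(mY D)) :
  (* P_Pi is the (finite) set of extreme points of Pi *)
  (forall p, p \in PP <-> extreme_point (Pi D) p) ->
  (* R_Pi is a finite set of representatives of the extreme rays of Pi *)
  (forall g, g \in RR -> extreme_ray (recPi D) g) ->
  (forall g, extreme_ray (recPi D) g -> exists2 t : R, 0 < t & t *: g \in RR) ->
  (* (A1) *) (forall x, Xset D x -> Uset D x !=set0) ->
  (* (A2) *) (forall x, Xset D x -> exists M : R,
                 forall u, Uset D x u -> forall j, `|u j 0| <= M) ->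
  (* (A3) *) joint_value D \is a fin_num ->
  (ref_value D (ref_feas D PP RR) = wstar D /\
     forall x, robust_opt D x <-> ref_opt D (ref_feas D PP RR) x) /\
  (ref_value D (ref_feas_kkt D PP RR) = wstar D /\
     forall x, robust_opt D x <-> ref_opt D (ref_feas_kkt D PP RR) x).
Proof.
move=> HPP HRR1 HRR2 HA1 HA2 _.
have Hk : forall x eta, ref_feas_kkt D PP RR x eta <-> Xset D x /\ (Phi D x <= eta%:E)%E.
  move=> x eta; split.
  - by move/feas_kkt_to_feas; apply: feas_to_phi.
  - by move=> [HX Hle]; apply: phi_to_feas_kkt.
have Hf : forall x eta, ref_feas D PP RR x eta <-> Xset D x /\ (Phi D x <= eta%:E)%E.
  move=> x eta; split.
  - exact: feas_to_phi.
  - by move=> [HX Hle]; apply: feas_kkt_to_feas; apply: phi_to_feas_kkt.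
by split; apply: final_gen.
Qed.
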